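(* Let $d\ge 1$ and $L\ge 1$ be integers, and for $1\le i,j\le d$ and $0\le \ell\le L$ let $P_i(x,u)$ and $Q_{i,j,\ell}(x,u)$ be polynomials in $x,u$ with nonnegative coefficients. Let $F_1(x,u),\dots,F_d(x,u)$ be formal power series in $x,u$ forming a solution of the positive linear system of catalytic equations \[ F_i(x,u) = P_i(x,u) + x\sum_{j=1}^d\sum_{\ell=0}^L Q_{i,j,\ell}(x,u)\,\Delta^\ell F_j(x,u),\qquad 1\le i\le d, \] and write $F_i(x,u)=\sum_{k\ge0}F_{i;k}(x)u^k$. Then for every $1\le i\le d$ and every $k\ge 0$ the power series $F_{i;k}(x)$ corresponds to a finite grammar.
   Context: For a power series $G(x,u)=\sum_{k\ge0}G_k(x)u^k$ and an integer $\ell\ge1$, the $\ell$-th difference is $\Delta^\ell G(x,u)=\bigl(G(x,u)-G_0(x)-G_1(x)u-\cdots-G_{\ell-1}(x)u^{\ell-1}\bigr)/u^\ell=\sum_{k\ge0}G_{k+\ell}(x)u^k$, and $\Delta^0G=G$. A power series $F(x)$ is said to correspond to a finite grammar (or to satisfy a positive polynomial system) if there exist $m\ge1$ and polynomials $R_1,\dots,R_m$ in $x,y_1,\dots,y_m$ with nonnegative coefficients such that the system $y_r=R_r(x,y_1,\dots,y_m)$, $1\le r\le m$, has a unique power series solution $(y_1(x),\dots,y_m(x))$ and $F(x)=y_1(x)$. *)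

(* Defs.v *)
From HB Require Import structures.
From mathcomp Require Import all_boot all_order all_algebra.
From mathcomp Require Import mpoly.
Set Implicit Arguments. Unset Strict Implicit. Unset Printing Implicit Defensive.
Import Order.TTheory GRing.Theory Num.Theory.
Local Open Scope ring_scope.

Section Series.
Variable R : realFieldType.

(** Univariate formal power series in x: [f n] = coefficient of x^n. *)
Definition ser := nat -> R.

Definition ser_one : ser := fun n => (n == 0%N)%:R.
Definition ser_X : ser := fun n => (n == 1%N)%:R.
Definition ser_mul (f g : ser) : ser :=
  fun n => \sum_(i < n.+1) f i * g (n - i)%N.
Definition ser_pow (f : ser) (k : nat) : ser := iter k (ser_mul f) ser_one.

Definition ser_monom (n : nat) (mo : 'X_{1..n}) (v : 'I_n -> ser) : ser :=
  foldr (fun i acc => ser_mul (ser_pow (v i) (mo i)) acc) ser_one (enum 'I_n).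

Definition ser_eval (n : nat) (p : {mpoly R[n]}) (v : 'I_n -> ser) : ser :=
  fun k => \sum_(mo <- msupp p) p@_mo * ser_monom mo v k.

Definition sys_vars (m : nat) (y : 'I_m -> ser) : 'I_m.+1 -> ser :=
  fun i => match unlift ord0 i with None => ser_X | Some j => y j end.

(** F corresponds to a finite grammar (satisfies a positive polynomial
    system): there are m >= 1 (written m.+1) and polynomials R_r in
    x, y_1..y_m with nonnegative coefficients such that the system
    y_r = R_r(x, y) has a unique power series solution, whose first
    component is F. *)
Definition finite_grammar (F : ser) : Prop :=
  exists (m : nat) (Rs : 'I_m.+1 -> {mpoly R[m.+2]}),
    (forall r mo, 0 <= (Rs r)@_mo) /\
    exists y : 'I_m.+1 -> ser,
      (forall y' : 'I_m.+1 -> ser,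
          (forall r, y' r = ser_eval (Rs r) (sys_vars y')) <-> y' = y)
      /\ F = y ord0.

(** Bivariate formal power series in x, u: [F n k] = coefficient of x^n u^k. *)
Definition ser2 := nat -> nat -> R.

(** A polynomial in x, u as element of {poly {poly R}}: outer variable u,
    inner variable x. *)
Definition poly2_ser (p : {poly {poly R}}) : ser2 := fun n k => (p`_k)`_n.

Definition poly2_nonneg (p : {poly {poly R}}) : Prop :=
  forall n k, 0 <= (p`_k)`_n.

Definition ser2_mul (A B : ser2) : ser2 :=
  fun n k => \sum_(a < n.+1) \sum_(b < k.+1) A a b * B (n - a)%N (k - b)%N.

Definition Delta (l : nat) (G : ser2) : ser2 := fun n k => G n (k + l)%N.

Definition ser2_xmul (G : ser2) : ser2 :=
  fun n k => if n is n'.+1 then G n' k else 0.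

End Series.

(* Main.v *)
Require Import Defs.
From HB Require Import structures.
From mathcomp Require Import all_boot all_order all_algebra.
From mathcomp Require Import mpoly.
From mathcomp Require Import boolp zify.
Set Implicit Arguments. Unset Strict Implicit. Unset Printing Implicit Defensive.
Import Order.TTheory GRing.Theory Num.Theory.
Local Open Scope ring_scope.

Section SerRing.
Variable R : realFieldType.
Local Notation ser := (ser R).

HB.instance Definition _ := gen_eqMixin ser.
HB.instance Definition _ := gen_choiceMixin ser.

Definition ser_add (f g : ser) : ser := fun n => f n + g n.
Definition ser_opp (f : ser) : ser := fun n => - f n.
Definition ser_zero : ser := fun _ => 0.

Lemma ser_addA : associative ser_add.
Proof. by move=> f g h; apply/funext => n; rewrite /ser_add addrA. Qed.
Lemma ser_addC : commutative ser_add.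
Proof. by move=> f g; apply/funext => n; rewrite /ser_add addrC. Qed.
Lemma ser_add0 : left_id ser_zero ser_add.
Proof. by move=> f; apply/funext => n; rewrite /ser_add add0r. Qed.
Lemma ser_addN : left_inverse ser_zero ser_opp ser_add.
Proof. by move=> f; apply/funext => n; rewrite /ser_add /ser_opp addNr. Qed.

HB.instance Definition _ := GRing.isZmodule.Build ser ser_addA ser_addC ser_add0 ser_addN.

Definition agree (N : nat) (f : ser) (p : {poly R}) := forall k, (k <= N)%N -> f k = p`_k.

Lemma agree_poly N (f : ser) : agree N f (\poly_(i < N.+1) f i).
Proof. by move=> k hk; rewrite coef_poly ltnS hk. Qed.

Lemma agree_mul N f g p q : agree N f p -> agree N g q -> agree N (ser_mul f g) (p * q).
Proof.
move=> hf hg k hk; rewrite coefM /ser_mul; apply: eq_bigr => i _.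
rewrite hf ?hg //; first exact: leq_trans (leq_subr _ _) hk.
by apply: leq_trans hk; rewrite -ltnS.
Qed.

Lemma ser_mulA : associative (@ser_mul R).
Proof.
move=> f g h; apply/funext => n.
have hf := @agree_poly n f; have hg := @agree_poly n g; have hh := @agree_poly n h.
rewrite (agree_mul hf (agree_mul hg hh)) // (agree_mul (agree_mul hf hg) hh) //.
by rewrite mulrA.
Qed.

Lemma ser_mulC : commutative (@ser_mul R).
Proof.
move=> f g; apply/funext => n.
have hf := @agree_poly n f; have hg := @agree_poly n g.
by rewrite (agree_mul hf hg) // (agree_mul hg hf) // mulrC.
Qed.

Lemma ser_mul1 : left_id (@ser_one R) (@ser_mul R).
Proof.
move=> f; apply/funext => n.
have hf := @agree_poly n f; have h1 : agree n (@ser_one R) 1.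
  by move=> k _; rewrite coef1.
by rewrite (agree_mul h1 hf) // mul1r hf.
Qed.

Lemma ser_mulDl : left_distributive (@ser_mul R) ser_add.
Proof.
move=> f g h; apply/funext => n; rewrite /ser_mul /ser_add -big_split /=.
by apply: eq_bigr => i _; rewrite mulrDl.
Qed.

Lemma ser_one_neq0 : (@ser_one R) != ser_zero.
Proof.
apply/eqP => /(congr1 (fun f => f 0%N)); rewrite /ser_one /ser_zero /=.
by move/eqP; rewrite oner_eq0.
Qed.

HB.instance Definition _ := GRing.Zmodule_isComNzRing.Build ser ser_mulA ser_mulC ser_mul1 ser_mulDl ser_one_neq0.

Lemma serM (f g : ser) : f * g = ser_mul f g. Proof. by []. Qed.
Lemma serD (f g : ser) n : (f + g) n = f n + g n. Proof. by []. Qed.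
Lemma serN (f : ser) n : (- f) n = - f n. Proof. by []. Qed.
Lemma ser0 n : (0 : ser) n = 0. Proof. by []. Qed.
Lemma ser1 : (1 : ser) = ser_one R. Proof. by []. Qed.

End SerRing.

Section Eval.
Variable R : realFieldType.
Local Notation ser := (ser R).

Definition cst (c : R) : ser := fun n => if n == 0%N then c else 0.

Lemma cst_mulE (c : R) (g : ser) k : (cst c * g) k = c * g k.
Proof.
rewrite serM /ser_mul big_ord_recl /= subn0 big1 ?addr0 // => i _.
by rewrite /cst /= mul0r.
Qed.

Lemma cst_zmod : zmod_morphism cst.
Proof.
move=> a b; apply/funext => n; rewrite /cst serD serN.
by case: (n == 0%N); rewrite ?subr0.
Qed.

Lemma cst_monoid : monoid_morphism cst.
Proof.
split.
  by apply/funext => n; rewrite /cst /= ser1 /ser_one; case: (n == 0%N).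
move=> a b; apply/funext => n; rewrite cst_mulE /cst.
by case: (n == 0%N); rewrite ?mulr0.
Qed.

HB.instance Definition _ := GRing.isZmodMorphism.Build R ser cst cst_zmod.
HB.instance Definition _ := GRing.isMonoidMorphism.Build R ser cst cst_monoid.

Lemma ser_sumE (I : Type) (s : seq I) (P : pred I) (F : I -> ser) k :
  (\sum_(i <- s | P i) F i) k = \sum_(i <- s | P i) F i k.
Proof. by apply: (big_morph (fun f : ser => f k)) => //. Qed.

Lemma ser_powE (f : ser) k : ser_pow f k = f ^+ k.
Proof. by elim: k => [|k IH] //=; rewrite exprS -IH. Qed.

Lemma ser_monomE n (mo : 'X_{1..n}) (v : 'I_n -> ser) :
  ser_monom mo v = mmap1 v mo.
Proof.
rewrite /ser_monom /mmap1 -big_enum /=.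
elim: (enum _) => [|i s IH] /=; first by rewrite big_nil.
by rewrite big_cons IH ser_powE.
Qed.

Lemma ser_evalE n (p : {mpoly R[n]}) (v : 'I_n -> ser) :
  ser_eval p v = mmap cst v p.
Proof.
apply/funext => k; rewrite /ser_eval /mmap ser_sumE; apply: eq_bigr => mo _.
by rewrite cst_mulE ser_monomE.
Qed.

End Eval.

Section Fix.
Variable R : realFieldType.
Local Notation ser := (ser R).

Definition eqb (n : nat) (f g : ser) := forall k, (k < n)%N -> f k = g k.

Lemma eqb_refl n f : eqb n f f. Proof. by []. Qed.

Lemma eqb_le m n f g : (m <= n)%N -> eqb n f g -> eqb m f g.
Proof. by move=> hmn h k hk; apply: h; apply: leq_trans hmn. Qed.

Lemma eqbD n f g f' g' : eqb n f f' -> eqb n g g' -> eqb n (f + g) (f' + g').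
Proof. by move=> h1 h2 k hk; rewrite !serD h1 ?h2. Qed.

Lemma eqbM n f g f' g' : eqb n f f' -> eqb n g g' -> eqb n (f * g) (f' * g').
Proof.
move=> h1 h2 k hk.
have e1 : \poly_(i < k.+1) f i = \poly_(i < k.+1) f' i.
  by apply/polyP => i; rewrite !coef_poly; case: ifP => // hi; rewrite h1 //; apply: leq_trans hk.
have e2 : \poly_(i < k.+1) g i = \poly_(i < k.+1) g' i.
  by apply/polyP => i; rewrite !coef_poly; case: ifP => // hi; rewrite h2 //; apply: leq_trans hk.
rewrite !serM (agree_mul (@agree_poly _ k f) (@agree_poly _ k g)) //.
by rewrite (agree_mul (@agree_poly _ k f') (@agree_poly _ k g')) // e1 e2.
Qed.

Lemma eqb_sum n (I : Type) (s : seq I) (P : pred I) (F G : I -> ser) :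
  (forall i, P i -> eqb n (F i) (G i)) ->
  eqb n (\sum_(i <- s | P i) F i) (\sum_(i <- s | P i) G i).
Proof.
move=> h; elim/big_rec2: _ => [|i a b Pi hab]; first exact: eqb_refl.
by apply: eqbD => //; apply: h.
Qed.

Lemma eqbX n f g k : eqb n f g -> eqb n (f ^+ k) (g ^+ k).
Proof. by move=> h; elim: k => [|k IH]; rewrite ?expr0 ?exprS //; apply: eqbM. Qed.

Lemma serXE (f : ser) k : (ser_X R * f) k = if k is k'.+1 then f k' else 0.
Proof.
have hX : agree k (ser_X R) 'X by move=> i _; rewrite coefX /ser_X.
rewrite serM (agree_mul hX (@agree_poly _ k f)) // coefXM.
by case: (k) => // k' /=; rewrite coef_poly ltnS leqnSn.
Qed.

Lemma eqbXM n f g : eqb n f g -> eqb n.+1 (ser_X R * f) (ser_X R * g).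
Proof.
move=> h [|k] hk; rewrite !serXE //; exact: h.
Qed.



Lemma eqb_prod n (I : Type) (s : seq I) (P : pred I) (F G : I -> ser) :
  (forall i, P i -> eqb n (F i) (G i)) ->
  eqb n (\prod_(i <- s | P i) F i) (\prod_(i <- s | P i) G i).
Proof.
move=> h; elim/big_rec2: _ => [|i a b Pi hab]; first exact: eqb_refl.
by apply: eqbM => //; apply: h.
Qed.

Lemma eqb_mmap m (p : {mpoly R[m]}) (v v' : 'I_m -> ser) n :
  (forall i, eqb n (v i) (v' i)) -> eqb n (mmap (@cst R) v p) (mmap (@cst R) v' p).
Proof.
move=> h; rewrite /mmap; apply: eqb_sum => mo _; apply: eqbM => //.
by rewrite /mmap1; apply: eqb_prod => i _; apply: eqbX.
Qed.

Definition guarded (I : Type) (Phi : (I -> ser) -> I -> ser) :=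
  forall n (y y' : I -> ser), (forall i, eqb n (y i) (y' i)) ->
    forall i, eqb n.+1 (Phi y i) (Phi y' i).

Lemma guarded_uniq (I : Type) (Phi : (I -> ser) -> I -> ser) (y y' : I -> ser) :
  guarded Phi -> (forall i, Phi y i = y i) -> (forall i, Phi y' i = y' i) -> y = y'.
Proof.
move=> hg hy hy'.
have H : forall n i, eqb n (y i) (y' i).
  elim=> [|n IH] i; first by [].
  by rewrite -hy -hy'; apply: hg.
apply/funext => i; apply/funext => k; exact: (H k.+1 i k).
Qed.

Definition fix_it (I : Type) (Phi : (I -> ser) -> I -> ser) n : I -> ser :=
  iter n Phi (fun _ => 0).

Definition fixp (I : Type) (Phi : (I -> ser) -> I -> ser) : I -> ser :=
  fun i k => fix_it Phi k.+1 i k.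

Lemma fix_it_eqb (I : Type) (Phi : (I -> ser) -> I -> ser) :
  guarded Phi -> forall a b, (a <= b)%N -> forall i, eqb a (fix_it Phi a i) (fix_it Phi b i).
Proof.
move=> hg; elim=> [|a IH] [|b] // hab i.
by rewrite /fix_it !iterS; apply: hg => j; apply: IH.
Qed.

Lemma fixpE (I : Type) (Phi : (I -> ser) -> I -> ser) :
  guarded Phi -> forall i, Phi (fixp Phi) i = fixp Phi i.
Proof.
move=> hg.
have H : forall n i, eqb n (fixp Phi i) (fix_it Phi n i).
  by move=> n i k hk; rewrite /fixp (fix_it_eqb hg hk).
move=> i; apply/funext => n.
rewrite (hg n _ _ (H n) i n (ltnSn n)) /fixp /fix_it iterS.
by [].
Qed.

End Fix.

Section NN.
Variable R : realFieldType.
Variable k : nat.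
Definition nn (p : {mpoly R[k]}) := forall mo, 0 <= p@_mo.

Lemma nnD p q : nn p -> nn q -> nn (p + q).
Proof. by move=> hp hq mo; rewrite mcoeffD addr_ge0. Qed.
Lemma nnM p q : nn p -> nn q -> nn (p * q).
Proof.
move=> hp hq mo; rewrite mcoeffM; apply: sumr_ge0 => i _; exact: mulr_ge0.
Qed.
Lemma nn_sum (I : Type) (s : seq I) (P : pred I) (F : I -> {mpoly R[k]}) :
  (forall i, P i -> nn (F i)) -> nn (\sum_(i <- s | P i) F i).
Proof.
move=> h; elim/big_rec: _ => [|i a Pi ha]; first by move=> mo; rewrite mcoeff0.
by apply: nnD => //; apply: h.
Qed.
Lemma nnC c : 0 <= c -> nn c%:MP.
Proof. by move=> hc mo; rewrite mcoeffC mulr_ge0. Qed.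
Lemma nn1 : nn 1. Proof. by apply: nnC. Qed.
Lemma nn0 : nn 0. Proof. by move=> mo; rewrite mcoeff0. Qed.
Lemma nnX i : nn 'X_i. Proof. by move=> mo; rewrite mcoeffX ler0n. Qed.
Lemma nnXn p n : nn p -> nn (p ^+ n).
Proof. by move=> hp; elim: n => [|n IH]; rewrite ?expr0 ?exprS; [exact: nn1| exact: nnM]. Qed.
Lemma nnZ c p : 0 <= c -> nn p -> nn (c *: p).
Proof. by move=> hc hp mo; rewrite mcoeffZ mulr_ge0. Qed.
End NN.

Section Gen.
Variable R : realFieldType.
Local Notation ser := (ser R).

Definition polyser (c : {poly R}) : ser := fun n => c`_n.

Definition mx k (c : {poly R}) : {mpoly R[k.+1]} :=
  \sum_(a < size c) c`_a *: 'X_ord0 ^+ a.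

Lemma nn_mx k (c : {poly R}) : (forall a, 0 <= c`_a) -> nn (@mx k c).
Proof.
move=> h; apply: nn_sum => a _; apply: nnZ => //; apply: nnXn; exact: nnX.
Qed.

Lemma serXn a : (ser_X R) ^+ a = fun n => (n == a)%:R.
Proof.
elim: a => [|a IH]; first by rewrite expr0.
apply/funext => n; rewrite exprS serXE; case: n => [|n] //=.
by rewrite IH.
Qed.

Lemma mmap_mx k (c : {poly R}) (v : 'I_k.+1 -> ser) : v ord0 = ser_X R ->
  mmap (@cst R) v (mx k c) = polyser c.
Proof.
move=> h0; rewrite /mx rmorph_sum /=; apply/funext => n.
rewrite ser_sumE /polyser.
transitivity ((\sum_(a < size c) c`_a *: 'X^a)`_n); last by rewrite -poly_def coefK.
rewrite coef_sum; apply: eq_bigr => a _.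
rewrite mmapZ rmorphXn /= mmapX mmap1U h0 cst_mulE serXn coefZ coefXn.
by [].
Qed.

Lemma mmapXi k (v : 'I_k -> ser) i : mmap (@cst R) v 'X_i = v i.
Proof. by rewrite mmapX mmap1U. Qed.

Variable U : finType.
Variable u0 : U.
Local Notation m := #|U|.
Variable c : U -> {poly R}.
Variable G : U -> {mpoly R[m.+2]}.
Variable y : U -> ser.

Definition varU (u : U) : 'I_m.+2 := lift ord0 (lift ord0 (enum_rank u)).

Definition ystar : 'I_m.+1 -> ser :=
  fun r => match unlift ord0 r with None => y u0 | Some r' => y (enum_val r') end.

Definition Sg (u : U) : {mpoly R[m.+2]} := mx m.+1 (c u) + 'X_ord0 * G u.

Lemma sys_vars_varU (z : 'I_m.+1 -> ser) u :
  sys_vars z (varU u) = z (lift ord0 (enum_rank u)).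
Proof. by rewrite /sys_vars /varU liftK. Qed.

Lemma ystar_varU u : sys_vars ystar (varU u) = y u.
Proof. by rewrite sys_vars_varU /ystar liftK enum_rankK. Qed.

Lemma ser_eval_Sg u (z : 'I_m.+1 -> ser) :
  ser_eval (Sg u) (sys_vars z) = polyser (c u) + ser_X R * mmap (@cst R) (sys_vars z) (G u).
Proof.
have h0 : sys_vars z ord0 = ser_X R by rewrite /sys_vars unlift_none.
by rewrite ser_evalE /Sg rmorphD rmorphM /= mmapXi mmap_mx // h0.
Qed.

Hypothesis hc : forall u a, 0 <= (c u)`_a.
Hypothesis hG : forall u, nn (G u).
Hypothesis hy : forall u, y u = polyser (c u) + ser_X R * mmap (@cst R) (sys_vars ystar) (G u).

Lemma grammar_intro : finite_grammar (y u0).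
Proof.
pose Rs := fun r : 'I_m.+1 => match unlift ord0 r with None => Sg u0 | Some r' => Sg (enum_val r') end.
exists m, Rs; split.
  move=> r; rewrite /Rs; case: unlift => [r'|]; apply: nnD; (try exact: nn_mx);
  by apply: nnM; [exact: nnX | exact: hG].
have solv : forall r, ystar r = ser_eval (Rs r) (sys_vars ystar).
  move=> r; rewrite /Rs /ystar; case: unlift => [r'|]; by rewrite ser_eval_Sg -hy.
exists ystar; split; last by rewrite /ystar unlift_none.
move=> y'; split; last by move=> ->.
move=> hy'.
apply: (@guarded_uniq _ _ (fun z r => ser_eval (Rs r) (sys_vars z))).
- move=> n z z' hz r; rewrite /Rs; case: unlift => [r'|]; rewrite !ser_eval_Sg;
  apply: eqbD => //; apply: eqbXM; apply: eqb_mmap => i; rewrite /sys_vars;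
  case: unlift => //.
- by move=> r; rewrite -hy'.
- by move=> r; rewrite -solv.
Qed.

End Gen.

Lemma sum_restrict (V : nmodType) N M (f : nat -> V) :
  (forall b, (M <= b)%N -> f b = 0) ->
  \sum_(b < N) f b = \sum_(b < M) (if (b < N)%N then f b else 0).
Proof.
move=> hf.
rewrite (big_ord_widen (N + M) f (leq_addr _ _)) big_mkcond /=.
rewrite (big_ord_widen (N + M) (fun b => if (b < N)%N then f b else 0) (leq_addl _ _)).
rewrite [RHS]big_mkcond /=; apply: eq_bigr => b _.
case: ifP => hN; case: ifP => hM //; by rewrite hf // leqNgt hM.
Qed.

Lemma sum_swap (Rg : comNzRingType) (I1 I2 I3 : finType) (A : I1 -> Rg)
   (f : I1 -> I2 -> I3 -> Rg) (g : I2 -> I3 -> Rg) :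
  \sum_(e : I2) \sum_(j : I3) (\sum_(s : I1) A s * f s e j) * g e j =
  \sum_(s : I1) A s * \sum_(e : I2) \sum_(j : I3) f s e j * g e j.
Proof.
under eq_bigr => e _ do under eq_bigr => j _ do rewrite mulr_suml.
under eq_bigr => e _ do rewrite exchange_big /=.
rewrite exchange_big /=; apply: eq_bigr => s _.
rewrite mulr_sumr; apply: eq_bigr => e _; rewrite mulr_sumr; apply: eq_bigr => j _.
by rewrite mulrA.
Qed.

Lemma sum_delta (Rg : comNzRingType) (B d : nat) (e0 : 'I_B) (j0 : 'I_d) (g : 'I_B -> 'I_d -> Rg) :
  \sum_(e : 'I_B) \sum_(j : 'I_d) (if ((e : nat) == (e0 : nat)) && (j0 == j) then 1 else 0) * g e j
  = g e0 j0.
Proof.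
rewrite (bigD1 e0) //= [X in _ + X]big1 ?addr0.
  rewrite (bigD1 j0) //= !eqxx mul1r big1 ?addr0 // => j hj.
  by rewrite eq_sym (negbTE hj) andbF mul0r.
move=> e he; apply: big1 => j _.
by rewrite (_ : ((e : nat) == e0) = false) ?mul0r //; apply/negbTE; move: he; apply: contra => /eqP h; apply/eqP/val_inj.
Qed.


Section Main.
Variables (R : realFieldType) (d L : nat).
Variable P : 'I_d -> {poly {poly R}}.
Variable Q : 'I_d -> 'I_d -> 'I_L.+1 -> {poly {poly R}}.
Variable F : 'I_d -> ser2 R.
Hypothesis hF : forall (i : 'I_d) (n k : nat),
        F i n k =
          poly2_ser (P i) n k
          + ser2_xmul
              (fun n' k' => \sum_(j < d) \sum_(l < L.+1)
                  ser2_mul (poly2_ser (Q i j l)) (Delta l (F j)) n' k')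
              n k.
Local Notation ser := (ser R).
Local Notation X := (ser_X R).

Definition Bq := (\max_(t : 'I_d * 'I_d * 'I_L.+1) size (Q t.1.1 t.1.2 t.2))%N.
Definition B := Bq.+1.

Lemma Q_big i j l b : (B <= b)%N -> (Q i j l)`_b = 0.
Proof.
move=> hb; apply: nth_default; apply: leq_trans (ltnW hb).
rewrite /Bq; have := @leq_bigmax _ (fun t : 'I_d * 'I_d * 'I_L.+1 => size (Q t.1.1 t.1.2 t.2)) (i, j, l). by [].
Qed.

Definition qs i j l (b : nat) : ser := polyser ((Q i j l)`_b).
Definition ps i (h : nat) : ser := polyser ((P i)`_h).
Definition Fs j (h : nat) : ser := fun n => F j n h.

Lemma qs_big i j l b : (B <= b)%N -> qs i j l b = 0.
Proof. by move=> hb; apply/funext => n; rewrite /qs /polyser Q_big // coef0. Qed.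

Lemma F_rec i h : Fs i h = ps i h + X * \sum_(j < d) \sum_(l < L.+1) \sum_(b < h.+1)
   qs i j l b * Fs j (h + l - b).
Proof.
apply/funext => n; rewrite {1}/Fs hF serD serXE.
case: n => [|n]; first by rewrite /ser2_xmul addr0.
congr (_ + _); rewrite /= !ser_sumE; apply: eq_bigr => j _.
rewrite ser_sumE; apply: eq_bigr => l _; rewrite ser_sumE /ser2_mul exchange_big /=.
apply: eq_bigr => b _; rewrite serM /ser_mul; apply: eq_bigr => a _.
rewrite /poly2_ser /Delta /qs /polyser /Fs addnBAC //.
by have := ltn_ord b; rewrite ltnS.
Qed.

Definition Sidx := ('I_d * 'I_L.+1 * 'I_B)%type.

Definition PhiT (base : nat -> 'I_d -> Sidx -> ser) (Y : nat * 'I_d -> ser) (w : nat * 'I_d) : ser :=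
  X * \sum_(S : Sidx) qs w.2 S.1.1 S.1.2 S.2 *
     (if (w.1 + S.1.2 < S.2)%N then base w.1 w.2 S else Y (w.1 + S.1.2 - S.2, S.1.1)%N).

Lemma PhiT_guarded base : guarded (PhiT base).
Proof.
move=> n Y Y' hY w; apply: eqbXM; apply: eqb_sum => S _; apply: eqbM => //.
by case: ifP => _ //; apply: hY.
Qed.

Lemma PhiT_sum base Y w : PhiT base Y w = \sum_(S : Sidx) (X * qs w.2 S.1.1 S.1.2 S.2) *
     (if (w.1 + S.1.2 < S.2)%N then base w.1 w.2 S else Y (w.1 + S.1.2 - S.2, S.1.1)%N).
Proof. by rewrite /PhiT mulr_sumr; apply: eq_bigr => S _; rewrite mulrA. Qed.

Definition delta (e : 'I_B) (j' : 'I_d) : nat -> 'I_d -> Sidx -> ser :=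
  fun t j S => if ((e : nat) == S.2 - S.1.2 - t - 1)%N && (S.1.1 == j') then 1 else 0.

Definition Wfam (e : 'I_B) (j' : 'I_d) : nat * 'I_d -> ser := fixp (PhiT (delta e j')).
Definition Wf (t : nat) (j : 'I_d) (e : 'I_B) (j' : 'I_d) : ser := Wfam e j' (t, j).

Lemma W_rec t j e j' : Wf t j e j' = PhiT (delta e j') (Wfam e j') (t, j).
Proof. by rewrite /Wf /Wfam fixpE //; apply: PhiT_guarded. Qed.

Variable T' : nat.
Local Notation T := T'.+1.
Hypothesis hTB : (B <= T)%N.
Hypothesis hTP : forall i h, (T <= h)%N -> (P i)`_h = 0.

Lemma IF t j : Fs j (T + t) = \sum_(e : 'I_B) \sum_(j' : 'I_d) Wf t j e j' * Fs j' (T - e.+1).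
Proof.
pose Phi := PhiT (fun t j S => Fs S.1.1 (T + t + S.1.2 - S.2)).
pose Y1 := fun w : nat * 'I_d => Fs w.2 (T + w.1).
pose Y2 := fun w : nat * 'I_d => \sum_(e : 'I_B) \sum_(j' : 'I_d) Wf w.1 w.2 e j' * Fs j' (T - e.+1).
have E1 : forall w, Phi Y1 w = Y1 w.
  case=> t0 j0; rewrite /Y1 /= F_rec.
  have -> : ps j0 (T + t0) = 0.
    by apply/funext => n; rewrite /ps /polyser hTP ?leq_addr // coef0.
  rewrite add0r /Phi /PhiT /=; congr (_ * _).
  have hr : forall jj ll, \sum_(b < (T + t0).+1) qs j0 jj ll b * Fs jj (T + t0 + ll - b)
      = \sum_(b < B) qs j0 jj ll b * Fs jj (T + t0 + ll - b).
    move=> jj ll; rewrite (@sum_restrict _ _ B (fun b => qs j0 jj ll b * Fs jj (T + t0 + ll - b))).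
      apply: eq_bigr => b _; rewrite ifT //; apply: leq_trans (ltn_ord b) _.
      by have := hTB; lia.
    by move=> b hb; rewrite qs_big // mul0r.
  under eq_bigr => jj _ do under eq_bigr => ll _ do rewrite hr.
  rewrite pair_bigA pair_bigA /=; apply: eq_bigr => S _.
  case: ifP => h //; congr (_ * Fs _ _); move: h; lia.
have E2 : forall w, Phi Y2 w = Y2 w.
  case=> t0 j0; rewrite /Phi /Y2 /=; symmetry.
  under eq_bigr => e _ do under eq_bigr => j' _ do rewrite W_rec PhiT_sum.
  rewrite sum_swap PhiT_sum; apply: eq_bigr => S _ /=; congr (_ * _).
  case: ifP => h //.
  have hlt : (S.2 - S.1.2 - t0 - 1 < B)%N.
    by have := ltn_ord S.2; lia.
  rewrite /delta /=.
  have -> := sum_delta (Ordinal hlt) S.1.1 (fun e j' => Fs j' (T - e.+1)).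
  by rewrite /=; congr Fs; have := ltn_ord S.2; lia.
have := guarded_uniq (PhiT_guarded _) E1 E2.
by move/(congr1 (fun f => f (t, j))).
Qed.

Definition Gs (s e1 : nat) (j3 : 'I_d) (e : 'I_B) (j' : 'I_d) : ser :=
  if (s <= e1)%N then (if ((e : nat) == e1 - s)%N && (j3 == j') then 1 else 0)
  else Wf (s - e1.+1) j3 e j'.

Lemma IW s t j e j' : Wf (s + t) j e j' =
  \sum_(e1 : 'I_B) \sum_(j3 : 'I_d) Wf t j e1 j3 * Gs s e1 j3 e j'.
Proof.
pose Phi := PhiT (fun t j S => Gs s (S.2 - S.1.2 - t - 1) S.1.1 e j').
pose Y1 := fun w : nat * 'I_d => Wf (s + w.1) w.2 e j'.
pose Y2 := fun w : nat * 'I_d => \sum_(e1 : 'I_B) \sum_(j3 : 'I_d) Wf w.1 w.2 e1 j3 * Gs s e1 j3 e j'.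
have E1 : forall w, Phi Y1 w = Y1 w.
  case=> t0 j0; rewrite /Phi /Y1 /= W_rec !PhiT_sum; apply: eq_bigr => S _ /=.
  congr (_ * _); rewrite /Gs /delta /Wf.
  case: (ltnP (t0 + S.1.2) S.2) => h1.
    case: (leqP s (S.2 - S.1.2 - t0 - 1)) => h2.
      have h3 : (s + t0 + S.1.2 < S.2)%N by move: h1 h2; lia.
      rewrite h3.
      by have -> : (S.2 - S.1.2 - t0 - 1 - s = S.2 - S.1.2 - (s + t0) - 1)%N by lia.
    have h3 : (s + t0 + S.1.2 < S.2)%N = false by apply/negbTE; rewrite -leqNgt; move: h1 h2; lia.
    rewrite h3.
    by have -> : (s - (S.2 - S.1.2 - t0 - 1).+1 = s + t0 + S.1.2 - S.2)%N by move: h1 h2; lia.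
  have h3 : (s + t0 + S.1.2 < S.2)%N = false by apply/negbTE; rewrite -leqNgt; move: h1; lia.
  rewrite h3.
  by have -> : (s + (t0 + S.1.2 - S.2) = s + t0 + S.1.2 - S.2)%N by move: h1; lia.
have E2 : forall w, Phi Y2 w = Y2 w.
  case=> t0 j0; rewrite /Phi /Y2 /=; symmetry.
  under eq_bigr => e1 _ do under eq_bigr => j3 _ do rewrite W_rec PhiT_sum.
  rewrite sum_swap PhiT_sum; apply: eq_bigr => S _ /=; congr (_ * _).
  case: ifP => h //.
  have hlt : (S.2 - S.1.2 - t0 - 1 < B)%N.
    by have := ltn_ord S.2; lia.
  rewrite /delta /=.
  by have -> := sum_delta (Ordinal hlt) S.1.1 (fun e1 j3 => Gs s e1 j3 e j').
have := guarded_uniq (PhiT_guarded _) E1 E2.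
by move/(congr1 (fun f => f (t, j))).
Qed.

Local Notation U := (('I_d * 'I_T) + ('I_L.+1 * 'I_d * 'I_B * 'I_d))%type.

Section Expr.
Variables (Rg : comNzRingType) (emb : {poly R} -> Rg) (V : U -> Rg).
Definition vF (j : 'I_d) (h : nat) : Rg := V (inl (j, inord h)).
Definition vW (a : nat) (j : 'I_d) (e : 'I_B) (j' : 'I_d) : Rg := V (inr (inord a, j, e, j')).

Definition ExF (i : 'I_d) (h : nat) : Rg :=
  \sum_(S : Sidx) (if (S.2 <= h)%N then emb ((Q i S.1.1 S.1.2)`_S.2) *
     (if (h + S.1.2 - S.2 < T)%N then vF S.1.1 (h + S.1.2 - S.2)
      else \sum_(e : 'I_B) \sum_(j' : 'I_d) vW (h + S.1.2 - S.2 - T) S.1.1 e j' * vF j' (T - e.+1))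
    else 0).

Definition ExW (a : nat) (j : 'I_d) (e : 'I_B) (j' : 'I_d) : Rg :=
  \sum_(S : Sidx) emb ((Q j S.1.1 S.1.2)`_S.2) *
    (if (a + S.1.2 < S.2)%N then (if ((e : nat) == S.2 - S.1.2 - a - 1)%N && (S.1.1 == j') then 1 else 0)
     else if (a + S.1.2 - S.2 <= L)%N then vW (a + S.1.2 - S.2) S.1.1 e j'
     else \sum_(e1 : 'I_B) \sum_(j3 : 'I_d) vW L S.1.1 e1 j3 *
        (if (a + S.1.2 - S.2 - L <= e1)%N then
           (if ((e : nat) == e1 - (a + S.1.2 - S.2 - L))%N && (j3 == j') then 1 else 0)
         else vW (a + S.1.2 - S.2 - L - e1.+1) j3 e j')).

Definition Ex (u : U) : Rg :=
  match u with inl (i, h) => ExF i h | inr (a, j, e, j') => ExW a j e j' end.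
End Expr.

Lemma Ex_morph (Rg1 Rg2 : comNzRingType) (phi : {rmorphism Rg1 -> Rg2})
  (emb1 : {poly R} -> Rg1) (emb2 : {poly R} -> Rg2) (V1 : U -> Rg1) (V2 : U -> Rg2) :
  (forall c, phi (emb1 c) = emb2 c) -> (forall u, phi (V1 u) = V2 u) ->
  forall u, phi (Ex emb1 V1 u) = Ex emb2 V2 u.
Proof.
move=> he hv [[i h]|[[[a j] e] j']] /=.
  rewrite /ExF rmorph_sum; apply: eq_bigr => S _.
  rewrite (fun_if phi) rmorph0 rmorphM he (fun_if phi) rmorph_sum /vF /vW hv.
  case: ifP => _ //; case: ifP => _ //; congr (_ * _); apply: eq_bigr => e _.
  by rewrite rmorph_sum; apply: eq_bigr => j' _; rewrite rmorphM !hv.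
rewrite /ExW rmorph_sum; apply: eq_bigr => S _.
rewrite rmorphM he !(fun_if phi) rmorph1 rmorph0 rmorph_sum /vW hv.
case: ifP => _ //; case: ifP => _ //; congr (_ * _); apply: eq_bigr => e1 _.
rewrite rmorph_sum; apply: eq_bigr => j3 _.
by rewrite rmorphM hv !(fun_if phi) rmorph1 rmorph0 hv.
Qed.

Definition yU (u : U) : ser :=
  match u with inl (j, h) => Fs j h | inr (a, j, e, j') => Wf a j e j' end.

Lemma SF (j : 'I_d) (h : 'I_T) : Fs j h = ps j h + X * ExF (@polyser R) yU j h.
Proof.
rewrite {1}F_rec; congr (_ + X * _).
have hr : forall jj ll, \sum_(b < h.+1) qs j jj ll b * Fs jj (h + ll - b)
   = \sum_(b < B) (if (b < h.+1)%N then qs j jj ll b * Fs jj (h + ll - b) else 0).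
  move=> jj ll; apply: (@sum_restrict _ _ B (fun b => qs j jj ll b * Fs jj (h + ll - b))).
  by move=> b hb; rewrite qs_big // mul0r.
under eq_bigr => jj _ do under eq_bigr => ll _ do rewrite hr.
rewrite /ExF pair_bigA pair_bigA /=; apply: eq_bigr => S _.
rewrite ltnS; case: ifP => hb //; congr (_ * _).
have hh := ltn_ord h.
rewrite /vF /yU /=; case: ifP => h1; first by rewrite inordK.
have := IF (h + S.1.2 - S.2 - T) S.1.1.
rewrite (_ : (T + (h + S.1.2 - S.2 - T) = h + S.1.2 - S.2)%N); last by move: h1; lia.
move=> ->; apply: eq_bigr => e _; apply: eq_bigr => j' _.
rewrite /vW /vF /yU /= !inordK //; first lia.
by have := ltn_ord S.1.2; move: h1 hh; lia.
Qed.

Lemma SW (a : 'I_L.+1) j e j' : Wf a j e j' = X * ExW (@polyser R) yU a j e j'.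
Proof.
rewrite W_rec /PhiT /ExW /=; congr (X * _); apply: eq_bigr => S _ /=; congr (_ * _).
case: ifP => h1 //.
have ha := ltn_ord a.
case: ifP => h2.
  by rewrite /vW /yU inordK.
rewrite -/(Wf (a + S.1.2 - S.2) S.1.1 e j').
have := IW (a + S.1.2 - S.2 - L) L S.1.1 e j'.
rewrite (_ : (a + S.1.2 - S.2 - L + L = a + S.1.2 - S.2)%N); last by move/negbT: h2; lia.
move=> ->; apply: eq_bigr => e1 _; apply: eq_bigr => j3 _.
rewrite /vW /yU /= inordK //; congr (_ * _); rewrite /Gs; case: ifP => h3 //.
rewrite inordK //.
by have := ltn_ord S.1.2; move: h3 ha; lia.
Qed.

Variable i0 : 'I_d.
Variable k0 : nat.
Hypothesis hk0 : (k0 < T)%N.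
Hypothesis hP : forall i, poly2_nonneg (P i).
Hypothesis hQ : forall i j l, poly2_nonneg (Q i j l).

Lemma main_fg : finite_grammar (fun n => F i0 n k0).
Proof.
pose c := fun u : U => match u with inl (j, h) => (P j)`_h | inr _ => 0 end.
pose G := fun u : U => Ex (mx #|{: U}|.+1) (fun v => 'X_(varU v)) u.
have -> : (fun n => F i0 n k0) = yU (inl (i0, inord k0)).
  by rewrite /yU inordK.
apply: (@grammar_intro R U _ c G).
- by case=> [[j h]|?] a; rewrite /c; [exact: hP | rewrite coef0].
- move=> [[j h]|[[[a j] e] j']]; rewrite /G /= ?/ExF ?/ExW /vF /vW;
  apply: nn_sum => S _;
  repeat match goal with
  | |- nn (\sum_(_ <- _ | _) _) => apply: nn_sum => ? _
  | |- nn (_ * _) => apply: nnM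
  | |- nn (if _ then _ else _) => case: ifP => _
  | |- nn (mx _ _) => apply: nn_mx => ?; exact: hQ
  | |- nn 0 => exact: nn0
  | |- nn 1 => exact: nn1
  | |- nn ('X_ _) => exact: nnX
  end.
- move=> u; rewrite /G (@Ex_morph _ _ (mmap (@cst R) (sys_vars (ystar (inl (i0, inord k0)) yU))) _ (@polyser R) _ yU).
  + case: u => [[j h]|[[[a j] e] j']] /=; first exact: SF.
    rewrite (_ : polyser 0 = 0) ?add0r; first exact: SW.
    by apply/funext => n; rewrite /polyser coef0.
  + by move=> cc; apply: mmap_mx; rewrite /sys_vars unlift_none.
  + move=> v; apply: etrans (ystar_varU _ _ _); exact: mmapXi.
Qed.

End Main.

Unset Implicit Arguments.
Theorem theorem1 (R : realFieldType) (d L : nat) (hd : (0 < d)%N) (hL : (0 < L)%N)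
    (P : 'I_d -> {poly {poly R}})
    (Q : 'I_d -> 'I_d -> 'I_L.+1 -> {poly {poly R}})
    (hP : forall i, poly2_nonneg (P i))
    (hQ : forall i j l, poly2_nonneg (Q i j l))
    (F : 'I_d -> ser2 R)
    (hF : forall (i : 'I_d) (n k : nat),
        F i n k =
          poly2_ser (P i) n k
          + ser2_xmul
              (fun n' k' => \sum_(j < d) \sum_(l < L.+1)
                  ser2_mul (poly2_ser (Q i j l)) (Delta l (F j)) n' k')
              n k) :
  forall (i : 'I_d) (k : nat), finite_grammar (fun n => F i n k).
Proof.
move=> i k.
pose D := (\max_(i : 'I_d) size (P i))%N.
pose T' := maxn (maxn (B Q) D) k.
apply: (@main_fg R d L P Q F hF T') => //.
- rewrite /T'; lia.
- move=> i1 h hh; apply: nth_default; apply: leq_trans (ltnW hh).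
  apply: leq_trans (_ : D <= T')%N.
    by have := @leq_bigmax _ (fun i : 'I_d => size (P i)) i1.
  rewrite /T'; lia.
- rewrite /T'; lia.
Qed.
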